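(* Let $k\ge1$ and let $H\le\mathrm{Aut}(X^* )$ be generated by $r_0=\sigma(\mathrm{id},\mathrm{id})$, $r_i=(r_{i-1},\mathrm{id})$ for $1\le i\le k$, $b_0=(r_k,b_1)$, $b_1=(r_k,b_2)$, $b_2=(\mathrm{id},b_0)$. Then $H$ is a regular branch group over its commutator subgroup $H'$.
   Context: Let $X=\{0,1\}$, $X^*$ the rooted binary tree of finite words, $G=\mathrm{Aut}(X^* )$. Sections: $g(wv)=g(w)g_w(v)$. Wreath recursion: $g=\sigma^{\varepsilon}(g_0,g_1)$ means $g(xw)=\sigma^\varepsilon(x)g_x(w)$ for $x\in X$, with $\sigma$ the swap of $0,1$. For $g\in G$ and $x\in X$, $\delta_x(g)\in G$ is the automorphism acting as $g$ on the subtree below $x$ (i.e. $xv\mapsto xg(v)$) and trivially elsewhere. An infinite subgroup $H\le G$ is regular branch over $K\le H$ if $K$ is normal of finite index in $H$ and $\delta_x(k)\in K$ for all $k\in K$, $x\in X$. *)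

(* Defs.v *)
(* Words over X = {0,1} are lists of booleans: 0 = false, 1 = true.
   Tree automorphisms act on the left as functions  list bool -> list bool. *)
From Stdlib Require Import List.
Import ListNotations.

Definition word := list bool.
Definition tfun := word -> word.

Definition comp (f g : tfun) : tfun := fun w => f (g w).
Definition idt : tfun := fun w => w.

Definition is_inv (f g : tfun) : Prop :=
  (forall w, g (f w) = w) /\ (forall w, f (g w) = w).

Inductive gen (S : tfun -> Prop) : tfun -> Prop :=
| gen_base f : S f -> gen S f
| gen_id : gen S idt
| gen_mul f g : gen S f -> gen S g -> gen S (comp f g)
| gen_inv f g : gen S f -> is_inv f g -> gen S g
| gen_ext f g : gen S f -> (forall w, f w = g w) -> gen S g.

Definition commutators (H : tfun -> Prop) (c : tfun) : Prop :=
  exists h1 h2 i1 i2, H h1 /\ H h2 /\ is_inv h1 i1 /\ is_inv h2 i2 /\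
    c = comp i1 (comp i2 (comp h1 h2)).

Definition derived (H : tfun -> Prop) : tfun -> Prop := gen (commutators H).

Definition delta (x : bool) (g : tfun) : tfun :=
  fun w => match w with
           | y :: v => if Bool.eqb y x then y :: g v else w
           | [] => []
           end.

Definition infinite_set (H : tfun -> Prop) : Prop :=
  ~ exists s : list tfun, forall h, H h -> exists f, In f s /\ forall w, f w = h w.

Definition subset_of (K H : tfun -> Prop) : Prop := forall k, K k -> H k.

Definition normal_in (K H : tfun -> Prop) : Prop :=
  forall h hi k, H h -> is_inv h hi -> K k -> K (comp hi (comp k h)).

(* finitely many left cosets t K (t in H) cover H *)
Definition finite_index (K H : tfun -> Prop) : Prop :=
  exists ts : list tfun, (forall t, In t ts -> H t) /\
    forall h, H h -> exists t k, In t ts /\ K k /\ forall w, h w = comp t k w.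

Definition regular_branch_over (H K : tfun -> Prop) : Prop :=
  infinite_set H /\ subset_of K H /\ normal_in K H /\ finite_index K H /\
  forall k x, K k -> K (delta x k).

(* Generators.  r_0 = sigma(id,id), r_i = (r_{i-1}, id). *)
Fixpoint r (i : nat) (w : word) : word :=
  match i, w with
  | _, [] => []
  | O, x :: v => negb x :: v
  | S j, false :: v => false :: r j v
  | S j, true :: v => true :: v
  end.

Inductive B3 := B0 | B1 | B2.

(* b_0 = (r_k, b_1), b_1 = (r_k, b_2), b_2 = (id, b_0). *)
Fixpoint b (k : nat) (j : B3) (w : word) {struct w} : word :=
  match w with
  | [] => []
  | x :: v =>
    match j, x with
    | B0, false => false :: r k v
    | B0, true => true :: b k B1 v
    | B1, false => false :: r k v
    | B1, true => true :: b k B2 v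
    | B2, false => false :: v
    | B2, true => true :: b k B0 v
    end
  end.

Definition gens (k : nat) (f : tfun) : Prop :=
  (exists i, i <= k /\ f = r i) \/ f = b k B0 \/ f = b k B1 \/ f = b k B2.

Definition Hgrp (k : nat) : tfun -> Prop := gen (gens k).

(* Main.v *)
Require Import Defs.
From Stdlib Require Import List Lia Arith Bool FunctionalExtensionality FinFun.
Import ListNotations.

Ltac fext := apply functional_extensionality; intro.

Definition pairf (t a : tfun) : tfun := fun w =>
  match w with [] => [] | false :: v => false :: t v | true :: v => true :: a v end.

Lemma pairf_comp t1 a1 t2 a2 : comp (pairf t1 a1) (pairf t2 a2) = pairf (comp t1 t2) (comp a1 a2).
Proof. fext; destruct x as [|[|] v]; reflexivity. Qed.
Lemma comp_idl f : comp idt f = f. Proof. reflexivity. Qed.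
Lemma comp_idr f : comp f idt = f. Proof. reflexivity. Qed.
Lemma pairf_id : pairf idt idt = idt.
Proof. fext; destruct x as [|[|] v]; reflexivity. Qed.
Lemma delta0 c : delta false c = pairf c idt.
Proof. fext; destruct x as [|[|] v]; reflexivity. Qed.
Lemma delta1 c : delta true c = pairf idt c.
Proof. fext; destruct x as [|[|] v]; reflexivity. Qed.
Lemma r_S i : r (S i) = pairf (r i) idt.
Proof. fext; destruct x as [|[|] v]; reflexivity. Qed.
Lemma b_0 k : b k B0 = pairf (r k) (b k B1).
Proof. fext; destruct x as [|[|] v]; reflexivity. Qed.
Lemma b_1 k : b k B1 = pairf (r k) (b k B2).
Proof. fext; destruct x as [|[|] v]; reflexivity. Qed.
Lemma b_2 k : b k B2 = pairf idt (b k B0).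
Proof. fext; destruct x as [|[|] v]; reflexivity. Qed.
Lemma r0_conj t a : comp (r 0) (comp (pairf t a) (r 0)) = pairf a t.
Proof. fext; destruct x as [|[|] v]; reflexivity. Qed.

Lemma r_inv_pt i w : r i (r i w) = w.
Proof. revert w; induction i; intros [|[|] v]; simpl; try rewrite IHi; reflexivity. Qed.
Lemma r_invol i : comp (r i) (r i) = idt.
Proof. fext; apply r_inv_pt. Qed.
Lemma b_inv_pt k w : forall j, b k j (b k j w) = w.
Proof. induction w as [|x v IH]; intros j; [destruct j; reflexivity|].
  destruct j, x; simpl; try rewrite r_inv_pt; try rewrite IH; reflexivity. Qed.
Lemma b_invol k j : comp (b k j) (b k j) = idt.
Proof. fext; apply b_inv_pt. Qed.
Lemma b_comm_pt k w : forall j j', b k j (b k j' w) = b k j' (b k j w).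
Proof. induction w as [|x v IH]; intros j j'; [destruct j, j'; reflexivity|].
  destruct j, j', x; simpl; try rewrite IH; reflexivity. Qed.
Lemma b_comm k j j' : comp (b k j) (b k j') = comp (b k j') (b k j).
Proof. fext; apply b_comm_pt. Qed.

Definition ev (l : list tfun) : tfun := fold_right comp idt l.

Lemma gens_invol k f : gens k f -> comp f f = idt.
Proof. intros [[i [_ ->]] | [ -> | [ -> | -> ]]]; [apply r_invol|apply b_invol|apply b_invol|apply b_invol]. Qed.

Lemma ev_app l1 l2 : ev (l1 ++ l2) = comp (ev l1) (ev l2).
Proof. induction l1; simpl; [reflexivity| rewrite IHl1; reflexivity]. Qed.

Lemma ev_rev_pt k l : Forall (gens k) l -> forall w, ev (rev l) (ev l w) = w /\ ev l (ev (rev l) w) = w.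
Proof.
  induction 1 as [|a l Ha Hl IH]; intros w; simpl; [split; reflexivity|].
  rewrite ev_app. simpl. cbv [comp idt].
  pose proof (equal_f (gens_invol k a Ha)) as Hi. cbv [comp idt] in Hi.
  split.
  - rewrite Hi. apply IH.
  - destruct (IH (a w)) as [_ ->]. apply Hi.
Qed.
Lemma is_inv_of_invol f : comp f f = idt -> is_inv f f.
Proof. intros E; pose proof (equal_f E) as E'; cbv [comp idt] in E'; split; exact E'. Qed.

Lemma word_H k l : Forall (gens k) l -> Hgrp k (ev l).
Proof. induction 1; simpl. apply gen_id. apply gen_mul; [apply gen_base|]; assumption. Qed.

Lemma H_word k h : Hgrp k h -> exists l, Forall (gens k) l /\ h = ev l.
Proof.
  induction 1 as [f Hf| |f g _ [l1 [F1 ->]] _ [l2 [F2 ->]]|f g _ [l [F ->]] Hinv|f g _ [l [F ->]] E].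
  - exists [f]; split; [constructor; auto|reflexivity].
  - exists []; split; [constructor|reflexivity].
  - exists (l1++l2); split; [apply Forall_app; auto| rewrite ev_app; reflexivity].
  - exists (rev l); split; [apply Forall_rev; auto|]. fext. destruct Hinv as [H1 H2].
    destruct (ev_rev_pt k l F x) as [_ E2]. rewrite <- E2 at 1. apply H1.
  - exists l; split; auto. fext; auto.
Qed.

Lemma inv_unique f g g' : is_inv f g -> is_inv f g' -> g = g'.
Proof. intros [A B] [C D]; fext. rewrite <- (D x) at 1. apply A. Qed.

Lemma ev_is_inv k l : Forall (gens k) l -> is_inv (ev l) (ev (rev l)).
Proof. intros F; split; intro w; apply (ev_rev_pt k l F w). Qed.

Lemma K_normal k : normal_in (derived (Hgrp k)) (Hgrp k).
Proof.
  intros h hi c Hh Hinv Hc. unfold derived in *.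
  assert (Hhi : Hgrp k hi) by (eapply gen_inv; eauto).
  destruct Hinv as [I1 I2].
  induction Hc as [c Hc| |f g _ IH1 _ IH2|f g _ IH Hfg|f g _ IH E].
  - destruct Hc as (h1 & h2 & i1 & i2 & H1 & H2 & [J1 J1'] & [J2 J2'] & ->).
    apply gen_base. exists (comp hi (comp h1 h)), (comp hi (comp h2 h)), (comp hi (comp i1 h)), (comp hi (comp i2 h)).
    split; [apply gen_mul; [assumption|apply gen_mul; assumption]|].
    split; [apply gen_mul; [assumption|apply gen_mul; assumption]|].
    split; [split; intro w; cbv [comp]; rewrite ?I2, ?J1, ?J1', ?I1; reflexivity|].
    split; [split; intro w; cbv [comp]; rewrite ?I2, ?J2, ?J2', ?I1; reflexivity|].
    fext; cbv [comp]; rewrite !I2; reflexivity.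
  - replace (comp hi (comp idt h)) with idt by (fext; cbv [comp idt]; auto). apply gen_id.
  - replace (comp hi (comp (comp f g) h)) with (comp (comp hi (comp f h)) (comp hi (comp g h)))
      by (fext; cbv [comp]; rewrite I2; reflexivity). apply gen_mul; auto.
  - eapply gen_inv; [exact IH|]. destruct Hfg as [F1 F2]; split; intro w; cbv [comp];
      rewrite ?I2, ?F1, ?F2, ?I1; reflexivity.
  - replace g with f by (fext; auto). exact IH.
Qed.

Lemma K_sub k : subset_of (derived (Hgrp k)) (Hgrp k).
Proof. intros c Hc; induction Hc as [c Hc| |f g _ IH1 _ IH2|f g _ IH Hfg|f g _ IH E].
  - destruct Hc as (h1 & h2 & i1 & i2 & H1 & H2 & J1 & J2 & ->).
    apply gen_mul; [exact (gen_inv _ h1 i1 H1 J1)|].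
    apply gen_mul; [exact (gen_inv _ h2 i2 H2 J2)|].
    apply gen_mul; assumption.
  - apply gen_id.
  - apply gen_mul; auto.
  - eapply gen_inv; eauto.
  - eapply gen_ext; eauto.
Qed.

Lemma comm_K k h1 h2 i1 i2 : Hgrp k h1 -> Hgrp k h2 -> is_inv h1 i1 -> is_inv h2 i2 ->
  derived (Hgrp k) (comp i1 (comp i2 (comp h1 h2))).
Proof. intros A1 A2 A3 A4; apply gen_base; exists h1, h2, i1, i2.
  split; [exact A1|split;[exact A2|split;[exact A3|split;[exact A4|reflexivity]]]]. Qed.

Lemma r_H k i : i <= k -> Hgrp k (r i).
Proof. intros; apply gen_base; left; exists i; split; [assumption|reflexivity]. Qed.
Lemma b_H k j : Hgrp k (b k j).
Proof. destruct j; apply gen_base; unfold gens; auto. Qed.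

Lemma lift_gen k s : gens k s -> exists a, comp a a = idt /\ Hgrp k (pairf s a).
Proof.
  intros [[i [Hi ->]] | [ -> | [ -> | -> ]]].
  - destruct (Nat.eq_dec i k) as [->|Hne].
    + exists (b k B1). split; [apply b_invol|]. rewrite <- b_0. apply b_H.
    + exists idt. split; [reflexivity|]. rewrite <- r_S. apply r_H; lia.
  - exists idt; split; [reflexivity|]. rewrite <- (r0_conj idt (b k B0)), <- b_2.
    apply gen_mul; [apply r_H; lia|apply gen_mul; [apply b_H|apply r_H; lia]].
  - exists (r k); split; [apply r_invol|]. rewrite <- (r0_conj (r k) (b k B1)), <- b_0.
    apply gen_mul; [apply r_H; lia|apply gen_mul; [apply b_H|apply r_H; lia]].
  - exists (r k); split; [apply r_invol|]. rewrite <- (r0_conj (r k) (b k B2)), <- b_1.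
    apply gen_mul; [apply r_H; lia|apply gen_mul; [apply b_H|apply r_H; lia]].
Qed.

Definition P k c := derived (Hgrp k) (pairf c idt).

Lemma P_id k : P k idt.
Proof. unfold P; rewrite pairf_id; apply gen_id. Qed.
Lemma P_mul k f g : P k f -> P k g -> P k (comp f g).
Proof. unfold P; intros; rewrite <- (comp_idl idt), <- pairf_comp; apply gen_mul; auto. Qed.

Lemma P_conj_gen k s c : gens k s -> P k c -> P k (comp s (comp c s)).
Proof. intros Hs Hc. destruct (lift_gen k s Hs) as [a [Ha HL]].
  unfold P. replace (pairf (comp s (comp c s)) idt) with (comp (pairf s a) (comp (pairf c idt) (pairf s a))).
  - apply (K_normal k); auto. apply is_inv_of_invol. rewrite pairf_comp, (gens_invol k s Hs), Ha. apply pairf_id.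
  - rewrite !pairf_comp, !comp_idl, Ha. reflexivity.
Qed.

Lemma P_conj_word k l c : Forall (gens k) l -> P k c -> P k (comp (ev (rev l)) (comp c (ev l))).
Proof.
  intros F; revert c; induction F as [|a l Ha Hl IH]; intros c Hc; [exact Hc|].
  simpl rev. rewrite ev_app.
  change (P k (comp (ev (rev l)) (comp (comp a (comp c a)) (ev l)))).
  apply IH, P_conj_gen; auto.
Qed.
Lemma ev_cons t l : ev (t::l) = comp t (ev l). Proof. reflexivity. Qed.
Lemma P_inv k f g : P k f -> is_inv f g -> P k g.
Proof. unfold P; intros Hf [A B]. apply (gen_inv _ _ _ Hf).
  split; intros [|[|] v]; simpl; try rewrite A; try rewrite B; reflexivity. Qed.

Lemma stepA k s l : (forall s t, gens k s -> gens k t -> P k (comp s (comp t (comp s t)))) ->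
  gens k s -> Forall (gens k) l -> P k (comp s (comp (ev (rev l)) (comp s (ev l)))).
Proof.
  intros Base Hs F. induction F as [|t l Ht Hl IH].
  - simpl. change (P k (comp s s)). rewrite (gens_invol k s Hs). apply P_id.
  - pose proof (ev_rev_pt k l Hl) as E.
    pose proof (equal_f (gens_invol k s Hs)) as Es. cbv [comp idt] in Es.
    replace (comp s (comp (ev (rev (t :: l))) (comp s (ev (t :: l)))))
      with (comp (comp s (comp (ev (rev l)) (comp s (ev l))))
                 (comp (ev (rev l)) (comp (comp s (comp t (comp s t))) (ev l)))).
    + apply P_mul; [exact IH|]. apply P_conj_word; auto.
    + fext. simpl rev. rewrite ev_app, !ev_cons. cbv [comp idt]. change (ev [t]) with (comp t idt).
      cbv [comp idt].
      destruct (E (s (t (s (t (ev l x)))))) as [_ ->]. rewrite Es. reflexivity.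
Qed.
Lemma stepB k l1 l2 : (forall s t, gens k s -> gens k t -> P k (comp s (comp t (comp s t)))) ->
  Forall (gens k) l1 -> Forall (gens k) l2 ->
  P k (comp (ev (rev l1)) (comp (ev (rev l2)) (comp (ev l1) (ev l2)))).
Proof.
  intros Base F1 F2. pose proof (ev_rev_pt k l2 F2) as EY.
  induction F1 as [|s l Hs Hl IH].
  - replace (comp (ev (rev [])) (comp (ev (rev l2)) (comp (ev []) (ev l2)))) with idt.
    + apply P_id.
    + fext. cbv [comp idt]. simpl. symmetry. apply (EY x).
  - pose proof (ev_rev_pt k l Hl) as EX.
    replace (comp (ev (rev (s :: l))) (comp (ev (rev l2)) (comp (ev (s :: l)) (ev l2))))
      with (comp (comp (ev (rev l)) (comp (comp s (comp (ev (rev l2)) (comp s (ev l2)))) (ev l)))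
                 (comp (ev (rev l)) (comp (ev (rev l2)) (comp (ev l) (ev l2))))).
    + apply P_mul; [|exact IH]. apply P_conj_word; auto. apply stepA; auto.
    + fext. simpl rev. rewrite ev_app, !ev_cons. change (ev [s]) with (comp s idt).
      cbv [comp idt].
      destruct (EX (ev (rev l2) (ev l (ev l2 x)))) as [_ ->].
      destruct (EY (ev l (ev l2 x))) as [_ ->]. reflexivity.
Qed.

Lemma K_P k : (forall s t, gens k s -> gens k t -> P k (comp s (comp t (comp s t)))) ->
  forall c, derived (Hgrp k) c -> P k c.
Proof.
  intros Base c Hc. induction Hc as [c Hc| |f g _ IH1 _ IH2|f g _ IH Hfg|f g _ IH E].
  - destruct Hc as (h1 & h2 & i1 & i2 & H1 & H2 & J1 & J2 & ->).
    destruct (H_word k h1 H1) as [l1 [F1 ->]].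
    destruct (H_word k h2 H2) as [l2 [F2 ->]].
    rewrite (inv_unique _ _ _ J1 (ev_is_inv k l1 F1)).
    rewrite (inv_unique _ _ _ J2 (ev_is_inv k l2 F2)).
    apply stepB; auto.
  - apply P_id.
  - apply P_mul; auto.
  - eapply P_inv; eauto.
  - replace g with f by (fext; auto). exact IH.
Qed.

Lemma branch_from_base k : (forall s t, gens k s -> gens k t -> P k (comp s (comp t (comp s t)))) ->
  forall c x, derived (Hgrp k) c -> derived (Hgrp k) (delta x c).
Proof.
  intros Base c x Hc. pose proof (K_P k Base c Hc) as Pc. unfold P in Pc.
  destruct x.
  - rewrite delta1, <- r0_conj. apply (K_normal k); auto. apply r_H; lia.
    apply is_inv_of_invol, r_invol.
  - rewrite delta0. exact Pc.
Qed.
Lemma comm_id s t : comp s t = comp t s -> comp s s = idt -> comp t t = idt ->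
  comp s (comp t (comp s t)) = idt.
Proof. intros E Hs Ht. transitivity (comp s (comp (comp t s) t)); [reflexivity|].
  rewrite <- E. change (comp (comp s s) (comp t t) = idt). rewrite Hs, Ht. reflexivity. Qed.

Lemma G_lift k s t : Hgrp k (pairf s idt) -> comp s s = idt -> gens k t ->
  P k (comp s (comp t (comp s t))) /\ P k (comp t (comp s (comp t s))).
Proof.
  intros HL Hs Ht. destruct (lift_gen k t Ht) as [a [Ha HLt]].
  assert (IL : is_inv (pairf s idt) (pairf s idt))
    by (apply is_inv_of_invol; rewrite pairf_comp, Hs; apply pairf_id).
  assert (ILt : is_inv (pairf t a) (pairf t a))
    by (apply is_inv_of_invol; rewrite pairf_comp, (gens_invol k t Ht), Ha; apply pairf_id).
  unfold P; split.
  - replace (pairf (comp s (comp t (comp s t))) idt)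
      with (comp (pairf s idt) (comp (pairf t a) (comp (pairf s idt) (pairf t a)))).
    + apply comm_K; auto.
    + rewrite !pairf_comp, ?comp_idl, ?comp_idr, Ha. reflexivity.
  - replace (pairf (comp t (comp s (comp t s))) idt)
      with (comp (pairf t a) (comp (pairf s idt) (comp (pairf t a) (pairf s idt)))).
    + apply comm_K; auto.
    + rewrite !pairf_comp, ?comp_idl, ?comp_idr, Ha. reflexivity.
Qed.

Lemma E1 k : 1 <= k -> comp (b k B1) (comp (r k) (comp (b k B1) (r k))) =
                      comp (b k B0) (comp (r k) (comp (b k B0) (r k))).
Proof. intros hk; destruct k as [|k']; [lia|]. fext; destruct x as [|[|] v]; cbv [comp]; simpl;
  rewrite ?b_inv_pt; reflexivity. Qed.
Lemma E2 k : 1 <= k -> comp (r k) (comp (b k B1) (comp (r k) (b k B1))) =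
                      comp (r k) (comp (b k B0) (comp (r k) (b k B0))).
Proof. intros hk; destruct k as [|k']; [lia|]. fext; destruct x as [|[|] v]; cbv [comp]; simpl;
  rewrite ?b_inv_pt; reflexivity. Qed.
Lemma E3 k : 1 <= k -> comp (b k B2) (r k) = comp (r k) (b k B2).
Proof. intros hk; destruct k as [|k']; [lia|]. fext; destruct x as [|[|] v]; cbv [comp]; simpl;
  reflexivity. Qed.

Lemma gens_r k i : i <= k -> gens k (r i). Proof. intros; left; eauto. Qed.
Lemma gens_b k j : gens k (b k j). Proof. destruct j; unfold gens; auto. Qed.

Lemma base_pairs k : 1 <= k -> forall s t, gens k s -> gens k t -> P k (comp s (comp t (comp s t))).
Proof.
  intros hk s t Hs Ht.
  assert (Gr : forall i, i < k -> forall t, gens k t ->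
     P k (comp (r i) (comp t (comp (r i) t))) /\ P k (comp t (comp (r i) (comp t (r i))))).
  { intros i Hi t0 Ht0. apply G_lift; auto. rewrite <- r_S; apply r_H; lia. apply r_invol. }
  assert (Gb : forall t, gens k t ->
     P k (comp (b k B0) (comp t (comp (b k B0) t))) /\ P k (comp t (comp (b k B0) (comp t (b k B0))))).
  { intros t0 Ht0. apply G_lift; auto. rewrite <- (r0_conj idt (b k B0)), <- b_2.
    apply gen_mul; [apply r_H; lia|apply gen_mul; [apply b_H|apply r_H; lia]]. apply b_invol. }
  assert (Cid : forall f g, comp f g = comp g f -> comp f f = idt -> comp g g = idt ->
     P k (comp f (comp g (comp f g)))).
  { intros f g E Hf Hg. rewrite comm_id; auto. apply P_id. }
  destruct Hs as [[i [Hi ->]] | [ -> | [ -> | -> ]]].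
  - destruct (Nat.lt_ge_cases i k) as [Hlt|Hge]; [apply Gr; auto|].
    assert (i = k) by lia; subst i.
    destruct Ht as [[j [Hj ->]] | [ -> | [ -> | -> ]]].
    + destruct (Nat.lt_ge_cases j k) as [Hlt|Hge2]; [apply (Gr j Hlt (r k)); apply gens_r; lia|].
      assert (j = k) by lia; subst j. apply Cid; auto using r_invol.
    + apply (Gb (r k)); apply gens_r; lia.
    + rewrite E2 by exact hk. apply (Gb (r k)); apply gens_r; lia.
    + apply Cid; [symmetry; apply E3; auto|apply r_invol|apply b_invol].
  - apply Gb; auto.
  - destruct Ht as [[j [Hj ->]] | [ -> | [ -> | -> ]]].
    + destruct (Nat.lt_ge_cases j k) as [Hlt|Hge2]; [apply (Gr j Hlt); apply gens_b|].
      assert (j = k) by lia; subst j. rewrite E1 by exact hk. apply Gb; apply gens_r; lia.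
    + apply (Gb (b k B1)); apply gens_b.
    + apply Cid; auto using b_invol.
    + apply Cid; auto using b_invol, b_comm.
  - destruct Ht as [[j [Hj ->]] | [ -> | [ -> | -> ]]].
    + destruct (Nat.lt_ge_cases j k) as [Hlt|Hge2]; [apply (Gr j Hlt); apply gens_b|].
      assert (j = k) by lia; subst j. apply Cid; [apply E3; auto|apply b_invol|apply r_invol].
    + apply (Gb (b k B2)); apply gens_b.
    + apply Cid; auto using b_invol, b_comm.
    + apply Cid; auto using b_invol.
Qed.

Lemma iter_pt n f w : Nat.iter n (delta false) f (repeat false n ++ w) = repeat false n ++ f w.
Proof. induction n; simpl; [reflexivity|]. rewrite IHn. reflexivity. Qed.

Lemma iter_fix n m f v : n < m -> Nat.iter m (delta false) f (repeat false n ++ true :: v) = repeat false n ++ true :: v.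
Proof. revert m; induction n; intros m Hm; destruct m as [|m]; try lia; simpl.
  - reflexivity.
  - rewrite IHn by lia. reflexivity. Qed.

Definition c0 : tfun := comp (r 0) (comp (r 1) (comp (r 0) (r 1))).
Lemma c0_val : c0 [false; false] = [false; true]. Proof. reflexivity. Qed.

Definition e (n : nat) : tfun := Nat.iter n (delta false) (delta true c0).

Lemma e_val n : e n (repeat false n ++ [true; false; false]) = repeat false n ++ [true; false; true].
Proof. unfold e. rewrite iter_pt. reflexivity. Qed.

Lemma e_inj : Injective e.
Proof.
  intros n m E.
  assert (A : forall n m, n < m -> e n <> e m).
  { intros a c Hac Eq. pose proof (e_val a) as V. rewrite Eq in V. unfold e in V.
    rewrite iter_fix in V by exact Hac. apply app_inv_head in V. discriminate. }
  destruct (Nat.lt_total n m) as [H|[H|H]]; auto.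
  - exfalso; exact (A _ _ H E).
  - exfalso; exact (A _ _ H (eq_sym E)).
Qed.

Lemma infinite_from k : (forall n, Hgrp k (e n)) -> infinite_set (Hgrp k).
Proof.
  intros He [s Hs].
  pose (l := map e (seq 0 (S (length s)))).
  assert (ND : NoDup l) by (apply Injective_map_NoDup; [exact e_inj|apply seq_NoDup]).
  assert (IN : incl l s).
  { intros x Hx. unfold l in Hx. apply in_map_iff in Hx as [n [<- _]].
    destruct (Hs _ (He n)) as [f [Hf Ef]]. replace (e n) with f by (fext; auto). exact Hf. }
  pose proof (NoDup_incl_length ND IN) as L. unfold l in L.
  rewrite length_map, length_seq in L. lia.
Qed.

Fixpoint prods (L : list tfun) : list tfun :=
  match L with [] => [idt] | s :: L' => prods L' ++ map (comp s) (prods L') end.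

Definition gensL k := map r (seq 0 (S k)) ++ [b k B0; b k B1; b k B2].

Lemma gens_in k f : gens k f -> In f (gensL k).
Proof. unfold gensL. intros [[i [Hi ->]] | [ -> | [ -> | -> ]]]; apply in_or_app.
  - left. apply in_map, in_seq. lia.
  - right; simpl; auto.
  - right; simpl; auto.
  - right; simpl; auto.
Qed.

Lemma in_gens k f : In f (gensL k) -> gens k f.
Proof. unfold gensL. intros H. apply in_app_or in H as [H|H].
  - apply in_map_iff in H as [i [<- Hi]]. apply in_seq in Hi. apply gens_r; lia.
  - simpl in H. destruct H as [<-|[<-|[<-|[]]]]; apply gens_b.
Qed.

Lemma prods_H k L : (forall f, In f L -> gens k f) -> forall t, In t (prods L) -> Hgrp k t.
Proof. induction L as [|s L IH]; intros HL t Ht; simpl in Ht.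
  - destruct Ht as [<-|[]]. apply gen_id.
  - apply in_app_or in Ht as [Ht|Ht].
    + apply IH; auto. intros; apply HL; simpl; auto.
    + apply in_map_iff in Ht as [t' [<- Ht']]. apply gen_mul.
      * apply gen_base, HL; simpl; auto.
      * apply IH; auto. intros; apply HL; simpl; auto.
Qed.

Lemma split_word k s L' l : gens k s -> (forall f, In f L' -> gens k f) ->
  Forall (fun f => f = s \/ In f L') l ->
  exists (ee : bool) l' c, Forall (fun f => In f L') l' /\ derived (Hgrp k) c /\
    ev l = comp (if ee then s else idt) (comp (ev l') c).
Proof.
  intros Hs HL F. induction F as [|g l Hg Hl IH].
  - exists false, [], idt. split; [constructor|split; [apply gen_id|reflexivity]].
  - destruct IH as (ee & l' & c & F' & Kc & E).
    rewrite ev_cons, E. destruct Hg as [->|Hg].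
    + exists (negb ee), l', c. split; auto. split; auto. destruct ee; simpl.
      * change (comp (comp s s) (comp (ev l') c) = comp idt (comp (ev l') c)).
        rewrite (gens_invol k s Hs). reflexivity.
      * reflexivity.
    + destruct ee.
      * assert (Fg : Forall (gens k) l') by (eapply Forall_impl; [|exact F']; intros; apply HL; auto).
        assert (Hg' : gens k g) by (apply HL; auto).
        exists true, (g :: l'), (comp (comp (ev (rev l')) (comp (comp g (comp s (comp g s))) (ev l'))) c).
        split; [constructor; auto|split].
        -- apply gen_mul; auto. apply (K_normal k (ev l') (ev (rev l'))); [apply word_H; auto|apply (ev_is_inv k); auto|].
           apply comm_K; try (apply gen_base; auto); apply is_inv_of_invol; apply (gens_invol k); auto.
        -- pose proof (ev_rev_pt k l' Fg) as EL.
           pose proof (equal_f (gens_invol k s Hs)) as Es. cbv [comp idt] in Es.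
           pose proof (equal_f (gens_invol k g Hg')) as Eg. cbv [comp idt] in Eg.
           rewrite ev_cons. fext. cbv [comp idt].
           destruct (EL (g (s (g (s (ev l' (c x))))))) as [_ ->]. rewrite Eg, Es. reflexivity.
      * exists false, (g :: l'), c. split; [constructor; auto|split; auto].
Qed.

Lemma decomp k L : (forall f, In f L -> gens k f) -> forall l, Forall (fun f => In f L) l ->
  exists t c, In t (prods L) /\ derived (Hgrp k) c /\ ev l = comp t c.
Proof.
  induction L as [|s L' IH]; intros HL l F.
  - destruct l as [|f l]; [|inversion F as [|? ? Hf]; destruct Hf].
    exists idt, idt. split; [simpl; auto|split; [apply gen_id|reflexivity]].
  - assert (HL' : forall f, In f L' -> gens k f) by (intros; apply HL; simpl; auto).
    destruct (split_word k s L' l) as (ee & l' & c & F' & Kc & E); auto.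
    + apply HL; simpl; auto.
    + eapply Forall_impl; [|exact F]. intros f Hf; simpl in Hf; intuition.
    + destruct (IH HL' l' F') as (t & c' & Ht & Kc' & E').
      exists (comp (if ee then s else idt) t), (comp c' c). split; [|split].
      * simpl. apply in_or_app. destruct ee; [right; apply in_map; auto|left; exact Ht].
      * apply gen_mul; auto.
      * rewrite E, E'. reflexivity.
Qed.
Theorem mainTheorem17 (k : nat) (hk : 1 <= k) :
  regular_branch_over (Hgrp k) (derived (Hgrp k)).
Proof.
  assert (Br := branch_from_base k (base_pairs k hk)).
  split; [|split; [apply K_sub|split; [apply K_normal|split]]].
  - apply infinite_from. intros n. apply K_sub.
    assert (Kc0 : derived (Hgrp k) c0).
    { unfold c0. apply comm_K; try (apply r_H; lia); apply is_inv_of_invol, r_invol. }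
    unfold e. induction n; simpl; apply Br; auto.
  - exists (prods (gensL k)). split.
    + apply prods_H. apply in_gens.
    + intros h Hh. destruct (H_word k h Hh) as [l [F ->]].
      destruct (decomp k (gensL k) (in_gens k) l) as (t & c & Ht & Kc & E).
      * eapply Forall_impl; [|exact F]. apply gens_in.
      * exists t, c. split; auto. split; auto. intros w; rewrite E; reflexivity.
  - exact Br.
Qed.
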